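(* Let $\gamma,\alpha,\beta$ be real constants and $\phi\in[0,1]$. Let $X$ be a random variable with values in $\mathbb{N}=\{0,1,2,\dots\}$ whose probability generating function satisfies $$g_X(s)=E[s^X]=h\big(\alpha+\beta(1-\phi s)^\gamma\big),\qquad s\in[0,1],$$ where $h$ is a real function analytic in a neighbourhood of $\alpha+\beta$. Then for every $k\in\mathbb{N}$, $$P(X=k)=(-\phi)^k\sum_{m=0}^k\frac{(-\beta)^m}{m!}\,h^{(m)}(\alpha+\beta)\,C_{\gamma,m}(k),$$ where $h^{(m)}$ denotes the $m$-th derivative of $h$ and $$C_{\gamma,m}(k)=\sum_{j=0}^m(-1)^j\binom{m}{j}\binom{\gamma j}{k}.$$
   Context: For real $x$ and $k\in\mathbb{N}$, $\binom{x}{k}=x(x-1)\cdots(x-k+1)/k!$ (with $\binom{x}{0}=1$). *)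

(* Defs.v *)
From Stdlib Require Import Reals Arith.
Open Scope R_scope.

Fixpoint gbinom (x : R) (k : nat) : R :=
  match k with
  | O => 1
  | S k' => gbinom x k' * (x - INR k') / INR (S k')
  end.

Definition Ccoef (gamma : R) (m k : nat) : R :=
  sum_f_R0 (fun j => (-1) ^ j * C m j * gbinom (gamma * INR j) k) m.

Definition analytic_at (h : R -> R) (c : R) : Prop :=
  exists r : R, 0 < r /\ exists a : nat -> R,
    forall x : R, Rabs (x - c) < r ->
      infinite_sum (fun n => a n * (x - c) ^ n) (h x).

Definition iter_derivs (h : R -> R) (hd : nat -> R -> R) (c : R) : Prop :=
  exists r : R, 0 < r /\
    forall x : R, Rabs (x - c) < r ->
      hd 0%nat x = h x /\
      forall m : nat, derivable_pt_lim (hd m) x (hd (S m) x).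

Definition is_pmf (p : nat -> R) : Prop :=
  (forall k, 0 <= p k) /\ infinite_sum p 1.

(* Main.v *)
Require Import Defs.
From Stdlib Require Import Reals Lra Lia FunctionalExtensionality Arith.
Open Scope R_scope.

Fixpoint psum (f : nat -> R) (n : nat) : R :=
  match n with O => 0 | S n' => psum f n' + f n' end.

Lemma psum_ext f g n : (forall i, (i < n)%nat -> f i = g i) -> psum f n = psum g n.
Proof. induction n; intros H; simpl; auto. rewrite IHn by (intros; apply H; lia). rewrite H by lia. auto. Qed.

Lemma psum_plus f g n : psum (fun i => f i + g i) n = psum f n + psum g n.
Proof. induction n; simpl; [lra|]. rewrite IHn. lra. Qed.

Lemma psum_scal c f n : c * psum f n = psum (fun i => c * f i) n.
Proof. induction n; simpl; [lra|]. rewrite <- IHn. lra. Qed.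

Lemma psum_swap (f : nat -> nat -> R) n1 n2 :
  psum (fun m => psum (fun i => f m i) n2) n1 = psum (fun i => psum (fun m => f m i) n1) n2.
Proof.
  induction n1; simpl.
  - induction n2; simpl; auto. rewrite <- IHn2. lra.
  - rewrite IHn1. rewrite <- psum_plus. auto.
Qed.

Lemma psum_shift f n : psum f (S n) = f 0%nat + psum (fun i => f (S i)) n.
Proof. induction n; simpl in *; [lra|]. rewrite IHn. lra. Qed.

Lemma sum_psum f n : sum_f_R0 f n = psum f (S n).
Proof. induction n; simpl in *; [lra|]. rewrite IHn. simpl. lra. Qed.

Lemma dlim_ext f g x l : (forall y, f y = g y) -> derivable_pt_lim f x l -> derivable_pt_lim g x l.
Proof. intros H D. replace g with f; auto. apply functional_extensionality; auto. Qed.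

Lemma dtay (F : nat -> R -> R) x0 n x :
  derivable_pt_lim (fun x => psum (fun i => F i x0 / INR (Factorial.fact i) * (x - x0)^i) (S n)) x
    (psum (fun i => F (S i) x0 / INR (Factorial.fact i) * (x - x0)^i) n).
Proof.
  induction n.
  - simpl. apply (dlim_ext (fct_cte (F 0%nat x0 / 1 * 1))).
    + intros; unfold fct_cte; simpl; lra.
    + replace 0 with (0+0) at 1 by lra.
      replace (0 + 0) with 0 by lra. apply derivable_pt_lim_const.
  - set (c := F (S n) x0 / INR (Factorial.fact (S n))).
    apply (dlim_ext (plus_fct (fun x => psum (fun i => F i x0 / INR (Factorial.fact i) * (x - x0)^i) (S n))
                     (mult_real_fct c (comp (fun y => y ^ (S n)) (fun x => x - x0))))).
    + intros y. unfold plus_fct, mult_real_fct, comp. simpl. fold c. auto.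
    + replace (psum (fun i => F (S i) x0 / INR (Factorial.fact i) * (x - x0) ^ i) (S n)) with
        (psum (fun i => F (S i) x0 / INR (Factorial.fact i) * (x - x0) ^ i) n + c * (INR (S n) * (x - x0) ^ n * 1)).
      * apply derivable_pt_lim_plus; auto. apply derivable_pt_lim_scal.
        apply derivable_pt_lim_comp.
        -- apply (dlim_ext (minus_fct id (fct_cte x0))). intros; reflexivity.
           replace 1 with (1 - 0) by lra. apply derivable_pt_lim_minus.
           apply derivable_pt_lim_id. apply derivable_pt_lim_const.
        -- apply derivable_pt_lim_pow.
      * simpl psum at 2. f_equal. unfold c. rewrite fact_simpl, mult_INR.
        pose proof (INR_fact_neq_0 n). assert (INR (S n) <> 0) by (apply not_0_INR; lia).
        field. auto.
Qed.

Lemma dbound f x0 l : derivable_pt_lim f x0 l ->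
  exists M d, 0 < d /\ forall x, Rabs (x - x0) < d -> Rabs (f x) <= M.
Proof.
  intros H. destruct (H 1 Rlt_0_1) as [del Hd].
  exists (Rabs (f x0) + (Rabs l + 1) * del), del. split. apply cond_pos.
  intros x Hx. pose proof (cond_pos del).
  destruct (Req_dec x x0) as [->|Hne].
  - pose proof (Rabs_pos l). nra.
  - set (h := x - x0) in *. assert (h <> 0) by (unfold h; lra).
    specialize (Hd h H1 Hx). replace (x0 + h) with x in Hd by (unfold h; lra).
    assert (E: f x = f x0 + h * ((f x - f x0) / h - l) + h * l) by (field; auto).
    rewrite E. eapply Rle_trans. apply Rabs_triang. eapply Rle_trans.
    apply Rplus_le_compat_r. apply Rabs_triang.
    rewrite !Rabs_mult. pose proof (Rabs_pos h). pose proof (Rabs_pos l).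
    pose proof (Rabs_pos ((f x - f x0) / h - l)). nra.
Qed.

Lemma psum_zero n : psum (fun _ => 0) n = 0.
Proof. induction n; simpl; lra. Qed.

Lemma psum_at0 (F : nat -> R -> R) x0 n :
  psum (fun i => F i x0 / INR (Factorial.fact i) * (x0 - x0)^i) (S n) = F 0%nat x0.
Proof.
  rewrite psum_shift. rewrite (psum_ext _ (fun _ => 0)). rewrite psum_zero. simpl. field.
  intros i _. simpl. replace (x0 - x0) with 0 by lra. ring.
Qed.

Lemma taylor (F : nat -> R -> R) x0 d : 0 < d ->
  (forall i x, Rabs (x - x0) < d -> derivable_pt_lim (F i) x (F (S i) x)) ->
  forall n, exists M e, 0 <= M /\ 0 < e /\ forall x, Rabs (x - x0) < e ->
    Rabs (F 0%nat x - psum (fun i => F i x0 / INR (Factorial.fact i) * (x - x0)^i) n)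
      <= M * Rabs (x - x0) ^ n.
Proof.
  intros Hd HF n. revert F HF. induction n; intros F HF.
  - destruct (dbound _ _ _ (HF 0%nat x0 ltac:(rewrite Rminus_diag, Rabs_R0; lra))) as [M [e [He HM]]].
    exists (Rabs M), (Rmin d e). split. apply Rabs_pos. split. apply Rmin_pos; auto.
    intros x Hx. simpl. rewrite Rminus_0_r, Rmult_1_r. eapply Rle_trans. apply HM.
    eapply Rlt_le_trans. apply Hx. apply Rmin_r. apply RRle_abs.
  - destruct (IHn (fun i => F (S i))) as [M [e [HM0 [He HM]]]].
    { intros; apply HF; auto. }
    exists M, (Rmin d e). split; auto. split. apply Rmin_pos; auto.
    intros x Hx.
    pose proof (Rmin_l d e). pose proof (Rmin_r d e).
    set (G := fun y => F 0%nat y - psum (fun i => F i x0 / INR (Factorial.fact i) * (y - x0)^i) (S n)).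
    set (G' := fun y => F 1%nat y - psum (fun i => F (S i) x0 / INR (Factorial.fact i) * (y - x0)^i) n).
    assert (HG : forall y, Rabs (y - x0) <= Rabs (x - x0) -> derivable_pt_lim G y (G' y)).
    { intros y Hy. apply (dlim_ext (minus_fct (F 0%nat) (fun y => psum (fun i => F i x0 / INR (Factorial.fact i) * (y - x0)^i) (S n)))).
      intros; reflexivity. apply derivable_pt_lim_minus. apply HF. lra. apply dtay. }
    assert (HG' : forall y, Rabs (y - x0) <= Rabs (x - x0) -> Rabs (G' y) <= M * Rabs (x - x0) ^ n).
    { intros y Hy. eapply Rle_trans. apply HM. lra. apply Rmult_le_compat_l; auto.
      apply pow_incr. split; auto. apply Rabs_pos. }
    assert (G0 : G x0 = 0). { unfold G. rewrite psum_at0. ring. }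
    change (Rabs (G x) <= M * Rabs (x - x0) ^ S n).
    destruct (Rtotal_order x x0) as [Hlt|[Heq|Hgt]].
    + destruct (MVT_cor2 G G' x x0 Hlt) as [c [Hc1 Hc2]].
      { intros c Hc. apply HG. rewrite !Rabs_left1 by lra. lra. }
      rewrite G0 in Hc1. replace (G x) with (- (G' c * (x0 - x))) by lra.
      rewrite Rabs_Ropp, Rabs_mult. simpl.
      replace (Rabs (x0 - x)) with (Rabs (x - x0)) by (rewrite <- Rabs_Ropp; f_equal; ring).
      assert (Rabs (G' c) <= M * Rabs (x - x0) ^ n). { apply HG'. rewrite !Rabs_left1 by lra. lra. }
      pose proof (Rabs_pos (x - x0)). nra.
    + subst. rewrite G0, Rminus_diag, Rabs_R0. simpl. lra.
    + destruct (MVT_cor2 G G' x0 x Hgt) as [c [Hc1 Hc2]].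
      { intros c Hc. apply HG. rewrite !Rabs_right by lra. lra. }
      rewrite G0 in Hc1. replace (G x) with (G' c * (x - x0)) by lra.
      rewrite Rabs_mult. simpl.
      assert (Rabs (G' c) <= M * Rabs (x - x0) ^ n). { apply HG'. rewrite !Rabs_right by lra. lra. }
      pose proof (Rabs_pos (x - x0)). nra.
Qed.

Definition PF (a phi : R) (i : nat) (s : R) : R :=
  INR (Factorial.fact i) * gbinom a i * (- phi)^i * Rpower (1 - phi * s) (a - INR i).

Lemma PF_deriv a phi i s : 0 < 1 - phi * s -> derivable_pt_lim (PF a phi i) s (PF a phi (S i) s).
Proof.
  intros Hs. set (K := INR (Factorial.fact i) * gbinom a i * (- phi)^i).
  set (b := a - INR i).
  apply (dlim_ext (mult_real_fct K (comp (fun x => Rpower x b) (fun s => 1 - phi * s)))).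
  { intros; reflexivity. }
  replace (PF a phi (S i) s) with (K * (b * Rpower (1 - phi * s) (b - 1) * (- phi))).
  - apply derivable_pt_lim_scal. apply derivable_pt_lim_comp.
    + apply (dlim_ext (minus_fct (fct_cte 1) (mult_real_fct phi id))). intros; reflexivity.
      replace (- phi) with (0 - phi * 1) by ring. apply derivable_pt_lim_minus.
      apply derivable_pt_lim_const. apply derivable_pt_lim_scal. apply derivable_pt_lim_id.
    + apply derivable_pt_lim_power. auto.
  - unfold PF, K, b. replace (gbinom a (S i)) with (gbinom a i * (a - INR i) / INR (S i)) by reflexivity. rewrite fact_simpl, mult_INR.
    replace (a - INR (S i)) with (a - INR i - 1) by (rewrite S_INR; ring).
    assert (INR (S i) <> 0) by (apply not_0_INR; lia). simpl pow. field. auto.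
Qed.

Lemma PF_at0 a phi i : PF a phi i 0 / INR (Factorial.fact i) = gbinom a i * (-phi)^i.
Proof.
  unfold PF. rewrite Rmult_0_r, Rminus_0_r. unfold Rpower. rewrite ln_1, Rmult_0_r, exp_0.
  pose proof (INR_fact_neq_0 i). field. auto.
Qed.

Lemma PF_0 a phi s : 0 < 1 - phi * s -> PF a phi 0 s = Rpower (1 - phi * s) a.
Proof. intros. unfold PF. simpl. rewrite Rminus_0_r. ring. Qed.

Lemma taylor_pow a phi : 0 <= phi <= 1 -> forall n, exists M e, 0 <= M /\ 0 < e /\
  forall s, 0 < s < e -> Rabs (Rpower (1 - phi * s) a - psum (fun i => gbinom a i * (-phi)^i * s^i) n) <= M * s ^ n.
Proof.
  intros Hphi n.
  destruct (taylor (PF a phi) 0 1 Rlt_0_1) with (n := n) as [M [e [HM [He H]]]].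
  { intros i x Hx. apply PF_deriv. rewrite Rminus_0_r in Hx. apply Rabs_def2 in Hx. nra. }
  exists M, (Rmin e 1). split; auto. split. apply Rmin_pos; lra.
  intros s Hs. pose proof (Rmin_l e 1). pose proof (Rmin_r e 1).
  specialize (H s). rewrite Rminus_0_r, Rabs_right in H by lra.
  rewrite PF_0 in H by nra. rewrite (psum_ext _ (fun i => PF a phi i 0 / INR (Factorial.fact i) * s ^ i)).
  apply H. lra. intros i _. rewrite PF_at0. auto.
Qed.

Definition O0 (f : R -> R) (n : nat) :=
  exists M e, 0 < e /\ forall s, 0 < s < e -> Rabs (f s) <= M * s ^ n.

Lemma O0_plus f g n : O0 f n -> O0 g n -> O0 (fun s => f s + g s) n.
Proof.
  intros [M1 [e1 [He1 H1]]] [M2 [e2 [He2 H2]]]. exists (M1 + M2), (Rmin e1 e2).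
  split. apply Rmin_pos; auto. intros s Hs. pose proof (Rmin_l e1 e2). pose proof (Rmin_r e1 e2).
  eapply Rle_trans. apply Rabs_triang. specialize (H1 s ltac:(lra)). specialize (H2 s ltac:(lra)). nra.
Qed.

Lemma O0_scal c f n : O0 f n -> O0 (fun s => c * f s) n.
Proof.
  intros [M [e [He H]]]. exists (Rabs c * M), e. split; auto. intros s Hs.
  rewrite Rabs_mult, Rmult_assoc. apply Rmult_le_compat_l. apply Rabs_pos. auto.
Qed.

Lemma O0_ext f g n : (exists e, 0 < e /\ forall s, 0 < s < e -> f s = g s) -> O0 f n -> O0 g n.
Proof.
  intros [e0 [He0 E]] [M [e [He H]]]. exists M, (Rmin e e0). split. apply Rmin_pos; auto.
  intros s Hs. pose proof (Rmin_l e e0). pose proof (Rmin_r e e0).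
  rewrite <- E by lra. apply H. lra.
Qed.

Lemma O0_psum (F : nat -> R -> R) n K : (forall m, O0 (F m) n) -> O0 (fun s => psum (fun m => F m s) K) n.
Proof.
  intros H. induction K; simpl.
  - exists 0, 1. split; [lra|]. intros. rewrite Rabs_R0. lra.
  - apply (O0_plus (fun s => psum (fun m => F m s) K) (F K)); auto.
Qed.

Lemma O0_sum (F : nat -> R -> R) n K : (forall m, O0 (F m) n) -> O0 (fun s => sum_f_R0 (fun m => F m s) K) n.
Proof.
  intros H. apply (O0_ext (fun s => psum (fun m => F m s) (S K))).
  exists 1; split; [lra|]. intros. rewrite sum_psum. auto. apply O0_psum; auto.
Qed.

Lemma small_zero a K e : 0 < e -> (forall s, 0 < s < e -> Rabs a <= s * K) -> a = 0.
Proof.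
  intros He H. destruct (Req_dec a 0); auto. exfalso.
  assert (Ha : 0 < Rabs a) by (apply Rabs_pos_lt; auto).
  pose proof (Rabs_pos K).
  set (s := Rmin (e/2) (Rabs a / (2 * (Rabs K + 1)))).
  assert (0 < s) by (apply Rmin_pos; [lra | apply Rdiv_lt_0_compat; lra]).
  pose proof (Rmin_l (e/2) (Rabs a / (2 * (Rabs K + 1)))).
  pose proof (Rmin_r (e/2) (Rabs a / (2 * (Rabs K + 1)))).
  fold s in H3, H4. specialize (H s ltac:(lra)).
  assert (s * (2 * (Rabs K + 1)) <= Rabs a).
  { apply (Rmult_le_compat_r (2 * (Rabs K + 1))) in H4; [|lra].
    unfold Rdiv in H4. rewrite Rmult_assoc, Rinv_l, Rmult_1_r in H4; lra. }
  pose proof (RRle_abs K). nra.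
Qed.

Lemma psum_bound b s n : 0 <= s <= 1 ->
  Rabs (psum (fun i => b i * s ^ i) n) <= psum (fun i => Rabs (b i)) n.
Proof.
  intros Hs. induction n; simpl. rewrite Rabs_R0; lra.
  eapply Rle_trans. apply Rabs_triang. rewrite Rabs_mult.
  assert (Rabs (s ^ n) <= 1).
  { rewrite Rabs_right by (apply Rle_ge, pow_le; lra). rewrite <- (pow1 n). apply pow_incr. lra. }
  pose proof (Rabs_pos (b n)). nra.
Qed.

Lemma poly_zero N : forall a, O0 (fun s => psum (fun i => a i * s ^ i) N) N ->
  forall i, (i < N)%nat -> a i = 0.
Proof.
  induction N; intros a Ha i Hi. lia.
  destruct Ha as [M [e [He H]]].
  assert (E : forall s, psum (fun i => a i * s ^ i) (S N) = a 0%nat + s * psum (fun i => a (S i) * s ^ i) N).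
  { intros s. rewrite psum_shift, psum_scal. simpl. f_equal. ring. apply psum_ext. intros; simpl; ring. }
  set (B := psum (fun i => Rabs (a (S i))) N).
  assert (A0 : a 0%nat = 0).
  { apply (small_zero _ (B + Rabs M) (Rmin e 1)). apply Rmin_pos; lra.
    intros s Hs. pose proof (Rmin_l e 1). pose proof (Rmin_r e 1).
    specialize (H s ltac:(lra)). rewrite E in H.
    pose proof (psum_bound (fun i => a (S i)) s N ltac:(lra)). fold B in H2.
    replace (a 0%nat) with ((a 0%nat + s * psum (fun i => a (S i) * s ^ i) N) - s * psum (fun i => a (S i) * s ^ i) N) by ring.
    eapply Rle_trans. apply Rabs_triang. rewrite Rabs_Ropp, Rabs_mult, (Rabs_right s) by lra.
    assert (s ^ N <= 1) by (rewrite <- (pow1 N); apply pow_incr; lra).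
    assert (M * s ^ S N <= s * Rabs M).
    { simpl. pose proof (RRle_abs M). pose proof (Rabs_pos M). pose proof (pow_le s N ltac:(lra)).
      assert (M * (s * s ^ N) <= Rabs M * (s * s^N)) by (apply Rmult_le_compat_r; nra).
      assert (Rabs M * (s * s^N) <= Rabs M * (s * 1)) by (apply Rmult_le_compat_l; [lra| apply Rmult_le_compat_l; lra]). lra. }
    assert (s * Rabs (psum (fun i => a (S i) * s ^ i) N) <= s * B) by (apply Rmult_le_compat_l; [lra| apply (psum_bound (fun i => a (S i))); lra]).
    lra. }
  destruct i. auto.
  apply (IHN (fun i => a (S i))); [|lia].
  exists M, e. split; auto. intros s Hs. specialize (H s Hs). rewrite E, A0, Rplus_0_l, Rabs_mult, (Rabs_right s) in H by lra.
  simpl in H. apply (Rmult_le_reg_l s). lra. replace (s * (M * s ^ N)) with (M * (s * s ^ N)) by ring. lra.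
Qed.

Lemma psum_scal_r c f n : psum f n * c = psum (fun i => f i * c) n.
Proof. rewrite Rmult_comm, psum_scal. apply psum_ext; intros; ring. Qed.

Lemma swap_scaled (A : nat -> R) (B : nat -> nat -> R) (x : nat -> R) n1 n2 :
  psum (fun m => A m * psum (fun i => B m i * x i) n2) n1 =
  psum (fun i => psum (fun m => A m * B m i) n1 * x i) n2.
Proof.
  rewrite (psum_ext _ (fun m => psum (fun i => A m * (B m i * x i)) n2)).
  rewrite psum_swap. apply psum_ext. intros i _. rewrite psum_scal_r. apply psum_ext; intros; ring.
  intros m _. apply psum_scal.
Qed.

Lemma sign_id0 beta a j : beta ^ (a + j) * (-1) ^ a = (-beta) ^ (a + j) * (-1) ^ j.
Proof.
  replace (-beta) with (-1 * beta) by ring. rewrite Rpow_mult_distr, !pow_add.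
  assert ((-1) ^ j * (-1) ^ j = 1) by (rewrite <- Rpow_mult_distr; replace (-1 * -1) with 1 by ring; apply pow1).
  replace (beta ^ a * beta ^ j * (-1) ^ a) with (beta ^ a * beta ^ j * (-1) ^ a * ((-1)^j * (-1)^j)) by (rewrite H; ring).
  ring.
Qed.

Lemma sign_id beta m j : (j <= m)%nat -> beta ^ m * (-1) ^ (m - j) = (-beta) ^ m * (-1) ^ j.
Proof.
  intros H. pose proof (sign_id0 beta (m - j) j). replace (m - j + j)%nat with m in H0 by lia. auto.
Qed.

Lemma term_expand X gamma beta m : 0 < X ->
  (beta * (Rpower X gamma - 1)) ^ m =
  (-beta) ^ m * sum_f_R0 (fun j => (-1) ^ j * C m j * Rpower X (gamma * INR j)) m.
Proof.
  intros HX. rewrite Rpow_mult_distr. replace (Rpower X gamma - 1) with (Rpower X gamma + -1) by ring.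
  rewrite binomial, !scal_sum. apply sum_eq. intros j Hj.
  rewrite <- Rpower_mult, Rpower_pow by (unfold Rpower; apply exp_pos).
  replace (C m j * Rpower X gamma ^ j * (-1) ^ (m - j) * beta ^ m) with
    (C m j * Rpower X gamma ^ j * (beta ^ m * (-1) ^ (m - j))) by ring.
  rewrite sign_id by auto. ring.
Qed.

Lemma expand X gamma beta phi s (hc : nat -> R) k : 0 < X ->
  psum (fun m => hc m / INR (Factorial.fact m) * (beta * (Rpower X gamma - 1)) ^ m) (S k)
  = psum (fun i => (-phi) ^ i * sum_f_R0 (fun m => (-beta) ^ m / INR (Factorial.fact m) * hc m * Ccoef gamma m i) k * s ^ i) (S k)
  + psum (fun m => (-beta) ^ m / INR (Factorial.fact m) * hc m *
       sum_f_R0 (fun j => (-1) ^ j * C m j * (Rpower X (gamma * INR j) -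
          psum (fun i => gbinom (gamma * INR j) i * (-phi) ^ i * s ^ i) (S k))) m) (S k).
Proof.
  intros HX. set (N := S k). set (A := fun m => (-beta) ^ m / INR (Factorial.fact m) * hc m).
  rewrite (psum_ext _ (fun m => A m * psum (fun i => (Ccoef gamma m i * (-phi) ^ i) * s ^ i) N +
     A m * sum_f_R0 (fun j => (-1) ^ j * C m j * (Rpower X (gamma * INR j) -
          psum (fun i => gbinom (gamma * INR j) i * (-phi) ^ i * s ^ i) N)) m)).
  - rewrite psum_plus. f_equal. rewrite swap_scaled. apply psum_ext. intros i _.
    f_equal. rewrite sum_psum, psum_scal. apply psum_ext. intros; unfold A; cbv beta; unfold Rdiv; ring.
  - intros m _. rewrite term_expand by auto. rewrite <- Rmult_plus_distr_l.
    replace (hc m / INR (Factorial.fact m) * ((- beta) ^ m * sum_f_R0 (fun j : nat => (-1) ^ j * C m j * Rpower X (gamma * INR j)) m))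
      with (A m * sum_f_R0 (fun j : nat => (-1) ^ j * C m j * Rpower X (gamma * INR j)) m) by (unfold A; cbv beta; unfold Rdiv; ring).
    f_equal. unfold Ccoef.
    rewrite (psum_ext _ (fun i => psum (fun j => ((-1) ^ j * C m j) * (gbinom (gamma * INR j) i * (-phi) ^ i)) (S m) * s ^ i)).
    + rewrite <- swap_scaled. rewrite !sum_psum, <- psum_plus. apply psum_ext. intros j _.
      ring.
    + intros i _. f_equal. rewrite sum_psum, psum_scal_r. apply psum_ext. intros; ring.
Qed.

Lemma psum_nonneg f n : (forall i, 0 <= f i) -> 0 <= psum f n.
Proof. intros H; induction n; simpl. lra. pose proof (H n). lra. Qed.

Lemma tail (p : nat -> R) s L N : (forall k, 0 <= p k) -> infinite_sum p 1 -> 0 < s < 1 ->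
  infinite_sum (fun k => p k * s ^ k) L -> Rabs (L - psum (fun i => p i * s ^ i) N) <= s ^ N.
Proof.
  intros Hp0 Hp1 Hs HL.
  assert (Hle1 : forall n, psum p n <= 1).
  { intros [|n]. simpl; lra. rewrite <- sum_psum. apply sum_incr; auto. }
  assert (Hm : forall m, 0 <= psum (fun i => p i * s ^ i) (N + m) - psum (fun i => p i * s ^ i) N
                  <= s ^ N * psum p (N + m)).
  { induction m.
    - rewrite Nat.add_0_r. split. lra. pose proof (psum_nonneg p N Hp0). pose proof (pow_le s N ltac:(lra)). nra.
    - rewrite Nat.add_succ_r. simpl.
      assert (s ^ (N + m) <= s ^ N).
      { rewrite pow_add. assert (s ^ m <= 1) by (rewrite <- (pow1 m); apply pow_incr; lra).
        pose proof (pow_le s N ltac:(lra)). nra. }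
      pose proof (Hp0 (N + m)%nat). pose proof (pow_le s (N + m) ltac:(lra)). nra. }
  apply Rle_plus_epsilon. intros eps Heps.
  destruct (HL eps Heps) as [N0 HN0]. specialize (HN0 (N + N0)%nat ltac:(lia)).
  unfold R_dist in HN0. rewrite sum_psum in HN0.
  replace (S (N + N0)) with (N + S N0)%nat in HN0 by lia.
  destruct (Hm (S N0)) as [H1 H2]. pose proof (Hle1 (N + S N0)%nat).
  pose proof (pow_le s N ltac:(lra)).
  assert (s ^ N * psum p (N + S N0) <= s ^ N) by nra.
  set (a := psum (fun i => p i * s ^ i) (N + S N0)) in *.
  set (b := psum (fun i => p i * s ^ i) N) in *.
  replace (L - b) with ((L - a) + (a - b)) by ring. eapply Rle_trans. apply Rabs_triang.
  rewrite <- Rabs_Ropp in HN0. replace (- (a - L)) with (L - a) in HN0 by ring.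
  rewrite (Rabs_right (a - b)) by lra. lra.
Qed.

Theorem mainTheorem1
  (gamma alpha beta phi : R) (p : nat -> R) (h : R -> R) (hd : nat -> R -> R)
  (Hphi : 0 <= phi <= 1)
  (Hp : is_pmf p)
  (Hh : analytic_at h (alpha + beta))
  (Hhd : iter_derivs h hd (alpha + beta))
  (Hpgf : forall s : R, 0 <= s <= 1 -> 0 < 1 - phi * s ->
     infinite_sum (fun k => p k * s ^ k)
       (h (alpha + beta * Rpower (1 - phi * s) gamma))) :
  forall k : nat,
    p k = (- phi) ^ k *
      sum_f_R0 (fun m => (- beta) ^ m / INR (fact m) * hd m (alpha + beta)
                          * Ccoef gamma m k) k.
Proof.
  intros k.
  destruct Hp as [Hp0 Hp1]. destruct Hhd as [r [Hr Hhd]].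
  set (c := alpha + beta) in *.
  set (N := S k).
  set (e := fun i => (-phi) ^ i * sum_f_R0 (fun m => (-beta) ^ m / INR (Factorial.fact m) * hd m c * Ccoef gamma m i) k).
  set (H := fun s => h (alpha + beta * Rpower (1 - phi * s) gamma)).
  set (Ef := fun j s => Rpower (1 - phi * s) (gamma * INR j) -
          psum (fun i => gbinom (gamma * INR j) i * (-phi) ^ i * s ^ i) N).
  set (Err := fun s => psum (fun m => (-beta) ^ m / INR (Factorial.fact m) * hd m c *
       sum_f_R0 (fun j => (-1) ^ j * C m j * Ef j s) m) N).
  assert (HA : O0 (fun s => H s - psum (fun i => p i * s ^ i) N) N).
  { exists 1, 1. split; [lra|]. intros s Hs. rewrite Rmult_1_l. apply tail; auto.
    apply Hpgf; nra. }
  assert (HE : forall j, O0 (Ef j) N).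
  { intros j. destruct (taylor_pow (gamma * INR j) phi Hphi N) as [M [e0 [_ [He0 T]]]].
    exists M, e0. split; auto. }
  assert (HErr : O0 Err N).
  { apply (O0_psum (fun m s => (-beta) ^ m / INR (Factorial.fact m) * hd m c *
       sum_f_R0 (fun j => (-1) ^ j * C m j * Ef j s) m)). intros m.
    apply O0_scal. apply (O0_sum (fun j s => (-1) ^ j * C m j * Ef j s)). intros j.
    apply O0_scal. auto. }
  assert (HB : O0 (fun s => H s - psum (fun m => hd m c / INR (Factorial.fact m) *
                   (beta * (Rpower (1 - phi * s) gamma - 1)) ^ m) N) N).
  { destruct (taylor (fun i y => hd i y) c r Hr (fun i x Hx => proj2 (Hhd x Hx) i) N) as [M1 [e1 [HM1 [He1 T1]]]].
    destruct (taylor_pow gamma phi Hphi 1) as [M2 [e2 [HM2 [He2 T2]]]].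
    set (K := Rabs beta * M2 + 1).
    assert (HK : 0 < K) by (unfold K; pose proof (Rabs_pos beta); nra).
    exists (M1 * (Rabs beta * M2) ^ N), (Rmin (Rmin 1 e2) (Rmin e1 r / K)).
    split. { apply Rmin_pos. apply Rmin_pos; lra. apply Rdiv_lt_0_compat; auto. apply Rmin_pos; auto. }
    intros s Hs.
    pose proof (Rmin_l (Rmin 1 e2) (Rmin e1 r / K)). pose proof (Rmin_r (Rmin 1 e2) (Rmin e1 r / K)).
    pose proof (Rmin_l 1 e2). pose proof (Rmin_r 1 e2). pose proof (Rmin_l e1 r). pose proof (Rmin_r e1 r).
    specialize (T2 s ltac:(lra)).
    replace (psum (fun i => gbinom gamma i * (- phi) ^ i * s ^ i) 1) with 1 in T2 by (simpl; ring).
    set (w := Rpower (1 - phi * s) gamma - 1) in *.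
    assert (Hw : Rabs (beta * w) <= Rabs beta * M2 * s).
    { rewrite Rabs_mult. simpl in T2. rewrite Rmult_1_r in T2. rewrite Rmult_assoc.
      apply Rmult_le_compat_l. apply Rabs_pos. auto. }
    assert (HKs : K * s < Rmin e1 r).
    { assert (s < Rmin e1 r / K) by lra. apply (Rmult_lt_compat_l K) in H6; auto.
      assert (K * (Rmin e1 r / K) = Rmin e1 r) by (field; lra). lra. }
    assert (Hy : Rabs (c + beta * w - c) < Rmin e1 r).
    { replace (c + beta * w - c) with (beta * w) by ring. unfold K in HKs. lra. }
    specialize (T1 (c + beta * w) ltac:(lra)).
    rewrite (proj1 (Hhd (c + beta * w) ltac:(lra))) in T1.
    replace (c + beta * w - c) with (beta * w) in T1 by ring.
    replace (H s) with (h (c + beta * w)) by (unfold H, w, c; f_equal; ring).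
    eapply Rle_trans. apply T1.
    rewrite Rmult_assoc. apply Rmult_le_compat_l; auto.
    rewrite <- Rpow_mult_distr. apply pow_incr. split. apply Rabs_pos. auto. }
  assert (HO : O0 (fun s => psum (fun i => (p i - e i) * s ^ i) N) N).
  { apply (O0_ext (fun s => (H s - psum (fun m => hd m c / INR (Factorial.fact m) *
                   (beta * (Rpower (1 - phi * s) gamma - 1)) ^ m) N + Err s) +
                   (-1) * (H s - psum (fun i => p i * s ^ i) N))).
    - exists 1. split; [lra|]. intros s Hs.
      unfold N. rewrite (expand (1 - phi * s) gamma beta phi s (fun m => hd m c) k) by nra.
      fold N.
      rewrite (psum_ext (fun i => (p i - e i) * s ^ i) (fun i => p i * s ^ i + (-1) * (e i * s ^ i))) by (intros; ring).
      rewrite psum_plus, <- psum_scal. unfold Err, e, Ef; cbv beta; unfold Rdiv; ring.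
    - apply O0_plus. apply O0_plus; auto. apply O0_scal; auto. }
  pose proof (poly_zero N (fun i => p i - e i) HO k ltac:(unfold N; lia)).
  unfold e in H0. simpl in H0. lra.
Qed.
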